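(* Let $(X,d)$ be a metric space, $\mu$ a non-atomic Borel measure on $X$, $m$ a Borel measure on $X$ and $0<p<\infty$. If a function $f:X\to\mathbb R$ has a $p$-weak upper gradient $\rho\in L^p(m)$, then $f$ is $ACC_p$.
   Context: A path is a continuous map $\gamma:[a,b]\to X$; a subpath is a restriction to a subinterval, trivial if that interval is a point; $\mathrm{Im}(\gamma)=\gamma([a,b])$. $\mu$ non-atomic: $\mu(\{x\})=0$ for all $x$. $\Gamma^\mu$ is the set of all non-trivial injective paths $\gamma$ with $0<\mu(\mathrm{Im}(\tilde\gamma))<\infty$ for every non-trivial subpath $\tilde\gamma$. For Borel $g\ge0$, $\int_\gamma g:=\int_{\mathrm{Im}(\gamma)}g\,d\mu$. For $\gamma:[a,b]\to X$ in $\Gamma^\mu$, $h(\gamma)=\mu(\mathrm{Im}(\gamma))$ and $\nu_\gamma(x)=\mu(\gamma([a,x]))$ is a bijection of $[a,b]$ onto $[0,h(\gamma)]$; the $\mu$-arc length parametrization is $\gamma_h=\gamma\circ\nu_\gamma^{-1}:[0,h(\gamma)]\to X$. For $\Gamma\subset\Gamma^\mu$, $\mathrm{Mod}_p(\Gamma)=\inf\int_Xg^p\,dm$ over Borel $g\ge0$ with $\int_\gamma g\ge1$ for all $\gamma\in\Gamma$; ''$p$-almost every path'' means all paths of $\Gamma^\mu$ outside a family of $p$-modulus zero. A Borel $\rho\ge0$ is a $p$-weak upper gradient of $f$ if $|f(x)-f(y)|\le\int_\gamma\rho$ for $p$-almost every $\gamma\in\Gamma^\mu$ with endpoints $x,y$.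 $f$ is $ACC_p$ if $f\circ\gamma_h:[0,h(\gamma)]\to\mathbb R$ is absolutely continuous for $p$-almost every $\gamma\in\Gamma^\mu$. *)

(* Defs.v *)
From HB Require Import structures.
From mathcomp Require Import all_boot all_order all_algebra.
From mathcomp Require Import all_classical all_reals all_analysis.
From mathcomp Require Import measurable_realfun.
Set Implicit Arguments. Unset Strict Implicit. Unset Printing Implicit Defensive.
Import Order.TTheory GRing.Theory Num.Theory.
Import numFieldNormedType.Exports.
Local Open Scope classical_set_scope.
Local Open Scope ring_scope.

(* Metric spaces with a distinguished point (mathcomp-analysis measurable
   types are pointed, i.e. nonempty). *)
#[short(type="pmetricType")]
HB.structure Definition PointedMetric (K : numDomainType) :=
  { M of Metric K M & isPointed M }.

Notation borel X := (g_sigma_algebraType (@open X)).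

(* A path gamma : [pa, pb] -> X, represented by its parameter interval and a
   map R -> X (only its values on [pa, pb] matter). *)
Record path (R : realType) (X : Type) := Path { pa : R; pb : R; pmap : R -> X }.

Section Paths.
Context (R : realType) (X : pmetricType R).
Implicit Types (g : path R X).

Definition icc (a b : R) : set R := [set t | a <= t <= b].

Definition is_path g :=
  pa g <= pb g /\ {within icc (pa g) (pb g), continuous (pmap g)}.

Definition Im g : set X := pmap g @` icc (pa g) (pb g).

Variable mu : {measure set (borel X) -> \bar R}.

Definition Gamma_mu : set (path R X) := fun g =>
  [/\ is_path g, pa g < pb g,
      (forall s t, s \in icc (pa g) (pb g) -> t \in icc (pa g) (pb g) ->
         pmap g s = pmap g t -> s = t) &
      (forall c d, pa g <= c -> c < d -> d <= pb g ->
         (0 < mu (pmap g @` icc c d) < +oo)%E)].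

Definition line_int (h : borel X -> \bar R) g : \bar R :=
  (\int[mu]_(x in (Im g : set (borel X))) h x)%E.

Variables (m : {measure set (borel X) -> \bar R}) (p : R).

Definition admissible (Gam : set (path R X)) (h : borel X -> \bar R) :=
  [/\ measurable_fun [set: borel X] h, (forall x, 0 <= h x)%E &
      forall g, Gam g -> (1 <= line_int h g)%E].

Definition Mod_p (Gam : set (path R X)) : \bar R :=
  ereal_inf [set (\int[m]_x (h x `^ p))%E | h in admissible Gam].

Definition p_ae (P : path R X -> Prop) :=
  exists N : set (path R X), [/\ N `<=` Gamma_mu, Mod_p N = 0%E &
    forall g, Gamma_mu g -> ~ N g -> P g].

Definition p_weak_upper_gradient (f : X -> R) (rho : borel X -> \bar R) :=
  [/\ measurable_fun [set: borel X] rho, (forall x, 0 <= rho x)%E &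
    p_ae (fun g => ((`|f (pmap g (pa g)) - f (pmap g (pb g))|)%:E
                     <= line_int rho g)%E)].

Definition hlen g : R := fine (mu (Im g)).
Definition nu g (t : R) : R := fine (mu (pmap g @` icc (pa g) t)).
Definition nu_inv g (s : R) : R :=
  xget (pa g) [set t | t \in icc (pa g) (pb g) /\ nu g t = s].
Definition gamma_h g (s : R) : X := pmap g (nu_inv g s).

End Paths.

Definition abs_cont (R : realType) (c d : R) (u : R -> R) :=
  forall e : R, 0 < e -> exists2 delta : R, 0 < delta &
    forall (n : nat) (a b : nat -> R),
      (forall i, (i < n)%N -> c <= a i /\ a i <= b i /\ b i <= d) ->
      (forall i j, (i < n)%N -> (j < n)%N -> i <> j -> b i <= a j \/ b j <= a i) ->
      \sum_(i < n) (b i - a i) < delta ->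
      \sum_(i < n) `|u (b i) - u (a i)| < e.

Definition ACC_p (R : realType) (X : pmetricType R)
  (mu m : {measure set (borel X) -> \bar R}) (p : R) (f : X -> R) :=
  p_ae mu m p (fun g => abs_cont 0 (hlen mu g) (f \o gamma_h mu g)).

(* Main.v *)
Require Import Defs.
From HB Require Import structures.
From mathcomp Require Import all_boot all_order all_algebra.
From mathcomp Require Import all_classical all_reals all_analysis.
From mathcomp Require Import measurable_realfun.
From mathcomp Require Import lra.
Import Order.TTheory GRing.Theory Num.Theory.
Import numFieldNormedType.Exports.
Local Open Scope classical_set_scope.
Local Open Scope ring_scope.

Section AC.
Context d (T : measurableType d) (R : realType) (mu : {measure set T -> \bar R}).
Variable rho : T -> \bar R.
Hypotheses (mrho : measurable_fun setT rho) (rho0 : forall x, (0 <= rho x)%E).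

Lemma rho_abs (D : set T) : measurable D -> (\int[mu]_(x in D) rho x < +oo)%E ->
  forall e : R, 0 < e -> exists2 del : R, 0 < del & forall A, measurable A -> A `<=` D ->
    (mu A < del%:E)%E -> (\int[mu]_(x in A) rho x < e%:E)%E.
Proof.
move=> mD ilt e e0.
have iD : mu.-integrable D rho.
  apply/integrableP; split; first exact: measurable_funTS.
  under eq_integral do rewrite gee0_abs //.
  exact: ilt.
have ae := integrable_ae mD iD.
pose F := (fine \o rho) \_ D.
have mfr : measurable_fun setT (EFin \o (fine \o rho)).
  apply: measurableT_comp => //; apply: measurableT_comp => //.
have iF : mu.-integrable setT (EFin \o F).
  rewrite /F -restrict_EFin; apply/(integrable_mkcond _ mD).
  apply/integrableP; split; first exact: measurable_funTS.
  apply: le_lt_trans ilt; apply: ge0_le_integral => //.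
  - apply: measurableT_comp => //; exact: measurable_funTS.
  - exact: measurable_funTS.
  - move=> x _ /=; rewrite ger0_norm; last exact: fine_ge0.
    by case: (rho x) (rho0 x).
have [del [del0 Hdel]] := integral_normr_continuous iF e0.
exists del => // A mA AD muA.
have -> : (\int[mu]_(x in A) rho x = \int[mu]_(x in A) (`|F x|)%:E)%E.
  apply: ae_eq_integral => //.
  - exact: measurable_funTS.
  - apply: measurable_funTS; apply: measurableT_comp => //; apply: measurableT_comp => //.
    apply/(measurable_restrictT _ mD); apply: measurable_funTS.
    by apply: measurableT_comp => //.
  apply: filterS ae => x Hx Ax.
  have Dx := AD _ Ax.
  rewrite /F /patch mem_set //= ger0_norm ?fine_ge0 // fineK //; exact: Hx.
have := Hdel A mA muA; rewrite -lte_fin /Rintegral fineK //.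
apply: integrable_fin_num => //.
apply: (integrableS measurableT) => //.
by have := integrable_abse iF.
Qed.

Lemma integral_setD0 (A B : set T) : measurable A -> measurable B -> mu B = 0%E ->
  (\int[mu]_(x in A `\` B) rho x = \int[mu]_(x in A) rho x)%E.
Proof.
move=> mA mB B0.
rewrite -[in RHS](setUIDK A B) setUC ge0_integral_setU //; last 4 first.
- exact: measurableD.
- exact: measurableI.
- exact: measurable_funTS.
- rewrite disj_set2E; apply/eqP; apply/seteqP; split => // x [[_ nb] [_ b]]; exact: nb.
rewrite (@null_set_integral _ _ _ mu (A `&` B) rho) ?adde0 //.
- exact: measurableI.
- exact: measurable_funTS.
- apply: (@subset_measure0 _ _ _ mu (A `&` B) B) => //; exact: measurableI.
Qed.
End AC.

Section Rfacts. Variable R : realType.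
Lemma r_gt0 n : 0 < (n.+1%:R : R)^-1. Proof. by rewrite invr_gt0 ltr0Sn. Qed.
Lemma r_le1 n : (n.+1%:R : R)^-1 <= 1. Proof. by rewrite invf_le1 ?ltr0Sn // ler1n. Qed.
Lemma r_mono n m : (n <= m)%N -> (m.+1%:R : R)^-1 <= (n.+1%:R)^-1.
Proof. by move=> nm; rewrite lef_pV2 ?posrE ?ltr0Sn // ler_nat ltnS. Qed.
Lemma r_small (y : R) : 0 < y -> exists k, (k.+1%:R : R)^-1 < y.
Proof. by move=> y0; have [k] := ltr_add_invr y0; rewrite add0r; exists k. Qed.
End Rfacts.

Section Aux.
Context (R : realType) (X : pmetricType R).
Notation T := (borel X).

Lemma closed_meas (A : set X) : closed A -> measurable (A : set T).
Proof.
move=> cA; rewrite -[A]setCK; apply: measurableC.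
apply: sub_sigma_algebra; exact: closed_openC.
Qed.

Lemma meas_img (g : R -> X) c d : {within icc c d, continuous g} ->
  measurable (g @` icc c d : set T).
Proof.
move=> cg; apply: closed_meas; apply: compact_closed; first exact: metric_hausdorff.
apply: continuous_compact => //.
rewrite /icc -set_itvcc; exact: segment_compact.
Qed.

Variable mu : {measure set T -> \bar R}.

Lemma muD0 (A B : set T) : measurable A -> measurable B -> mu B = 0%E ->
  mu (A `\` B) = mu A.
Proof.
move=> mA mB B0; rewrite [in RHS](measureDI mu mA mB).
rewrite (@subset_measure0 _ _ _ mu (A `&` B) B) ?adde0//; first exact: measurableI.
Qed.

Hypothesis mu_pt : forall x : X, mu [set x] = 0%E.
Variable g : Defs.path R X.
Hypothesis Gg : Gamma_mu mu g.
Local Notation a := (Defs.pa g).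
Local Notation b := (Defs.pb g).
Local Notation ga := (Defs.pmap g).
Definition I c d : set T := ga @` icc c d.

Lemma mI c d : a <= c -> d <= b -> measurable (I c d).
Proof.
move=> ac db; apply: meas_img.
case: Gg => -[_ cg] _ _ _.
apply: continuous_subspaceW cg => t /andP[ct td]; apply/andP; split.
  lra. lra.
Qed.

Lemma Ipt c : I c c = [set ga c].
Proof.
apply/seteqP; split => x.
  by case=> t /andP[ct tc] <-; rewrite (@le_anti _ _ t c) ?ct ?tc.
by move=> ->; exists c => //; rewrite /icc /= lexx.
Qed.

Lemma ga_inj s t : a <= s <= b -> a <= t <= b -> ga s = ga t -> s = t.
Proof.
case: Gg => _ _ inj _ hs ht; apply: inj; rewrite inE //.
Qed.

Lemma Msplit c e d : a <= c -> c <= e -> e <= d -> d <= b ->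
  mu (I c d) = (mu (I c e) + mu (I e d))%E.
Proof.
move=> ac ce ed db.
have mpt : measurable (I e e) by apply: mI; [lra|lra].
rewrite -(@muD0 (I e d) (I e e)) ?Ipt//.
have mce : measurable (I c e) by apply: mI => //; lra.
have med : measurable (I e d) by apply: mI => //; lra.
rewrite -measureU //; last 2 first.
- by apply: measurableD => //; rewrite -Ipt.
- apply/seteqP; split => // x [[s /andP[cs se] <-]] [[t /andP[et td] ets]].
  move=> /= ne.
  have st : s = t.
    apply: ga_inj => //; apply/andP; split.
    + lra.
    + lra.
    + lra.
    + lra.
  by subst t; apply: ne; congr ga; apply: le_anti; rewrite se et.
apply: congr1; apply/seteqP; split => x.
- case=> t /andP[ct td] <-.
  have [te|et] := leP t e; first by left; exists t => //; apply/andP.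
  right; split; first by exists t => //; apply/andP; split => //; exact: ltW.
  move=> /= /ga_inj eq.
  have : t = e.
    apply: eq; apply/andP; split.
    + lra.
    + lra.
    + lra.
    + lra.
  by move=> tE; rewrite tE ltxx in et.
- case=> [[t /andP[ct te] <-]|[[t /andP[et td] <-] _]].
    by exists t => //; apply/andP; split => //; lra.
  by exists t => //; apply/andP; split => //; lra.
- apply: mI; lra.
- by rewrite -Ipt.
Qed.

Lemma shrink (F : nat -> set T) (x : X) : (forall n, measurable (F n)) ->
  (forall n m, (n <= m)%N -> F m `<=` F n) -> (mu (F 0%N) < +oo)%E ->
  \bigcap_n F n = [set x] -> forall e : R, 0 < e -> exists n, (mu (F n) < e%:E)%E.
Proof.
move=> mF ni F0 cap e e0.
have cv := @nonincreasing_cvg_mu _ _ _ mu F F0 mF.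
rewrite cap mu_pt in cv.
have mx : measurable ([set x] : set T).
  apply: closed_meas; apply: accessible_closed_set1.
  exact: hausdorff_accessible (@metric_hausdorff _ _).
have cv2 : (mu \o F @ \oo --> 0%E).
  apply: (cv mx) => n m nm; rewrite subsetEset; exact: ni.
case/fine_cvgP: cv2 => _ cv3.
have := cvgr_lt _ cv3 _ e0; case=> N _ HN.
exists N; have := HN N (leqnn N) => /= h.
have fN : mu (F N) \is a fin_num.
  rewrite ge0_fin_numE//; apply: le_lt_trans F0; apply: le_measure; rewrite ?inE //.
  exact: ni.
by rewrite -(fineK fN) lte_fin.
Qed.

Lemma Mpos c d : a <= c -> c < d -> d <= b -> (0 < mu (I c d) < +oo)%E.
Proof. by case: Gg => _ _ _ H; apply: H. Qed.
Arguments Mpos [c d].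

Lemma Mright c e : a <= c -> c < b -> 0 < e ->
  exists t, [/\ c < t, t <= b & (mu (I c t) < e%:E)%E].
Proof.
move=> ac cb e0.
pose t n := c + (b - c) * (n.+1%:R)^-1.
have t1 n : c < t n by rewrite /t ltrDl mulr_gt0 ?subr_gt0 ?r_gt0.
have t2 n : t n <= b.
  have h : (b - c) * (n.+1%:R)^-1 <= (b - c) * 1.
    by rewrite ler_wpM2l ?r_le1 // subr_ge0 ltW.
  rewrite mulr1 in h; rewrite /t; move: h; generalize ((b - c) / n.+1%:R) => q h; lra.
have t3 n m : (n <= m)%N -> t m <= t n.
  move=> nm; rewrite /t lerD2l ler_wpM2l ?r_mono //; lra.
have [n Hn] : exists n, (mu (I c (t n)) < e%:E)%E.
  apply: (@shrink (fun n => I c (t n)) (ga c)) => //.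
  - move=> n; apply: mI => //.
  - move=> n m nm x [u /andP[cu ut] <-]; exists u => //; apply/andP; split => //.
    exact: le_trans ut (t3 _ _ nm).
  - by case/andP: (@Mpos c (t 0%N) ac (t1 0%N) (t2 0%N)).
  apply/seteqP; split => x; last first.
    by move=> -> n; exists c => //; apply/andP; split => //; exact: ltW.
  move=> Hx; have [u /andP[cu ut0] xu] := Hx 0%N Logic.I; subst x.
  have ut n : u <= t n.
    have [v /andP[cv vt] e1] := Hx n Logic.I.
    have -> : u = v.
      have := t2 0%N; have := t2 n => h1 h2.
      by apply: ga_inj => //; apply/andP; split; lra.
    by [].
  have [uc|cu'] := leP u c.
    by rewrite /= (@le_anti _ _ u c) ?uc ?cu.
  have [k hk] : exists k, (k.+1%:R : R)^-1 < (u - c) / (b - c).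
    by apply: r_small; rewrite divr_gt0 ?subr_gt0.
  exfalso; have := ut k; rewrite /t.
  have : (b - c) * (k.+1%:R)^-1 < u - c.
    by rewrite mulrC -ltr_pdivlMr ?subr_gt0.
  generalize ((b - c) / k.+1%:R) => q; lra.
by exists (t n); split.
Qed.
Arguments Mright [c e].

Lemma Mleft d e : a < d -> d <= b -> 0 < e ->
  exists s, [/\ a <= s, s < d & (mu (I s d) < e%:E)%E].
Proof.
move=> ad db e0.
pose t n := d - (d - a) * (n.+1%:R)^-1.
have t1 n : t n < d by rewrite /t ltrBlDr ltrDl mulr_gt0 ?subr_gt0 ?r_gt0.
have t2 n : a <= t n.
  have h : (d - a) * (n.+1%:R)^-1 <= (d - a) * 1.
    by rewrite ler_wpM2l ?r_le1 // subr_ge0 ltW.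
  rewrite mulr1 in h; rewrite /t; move: h; generalize ((d - a) / n.+1%:R) => q h; lra.
have t3 n m : (n <= m)%N -> t n <= t m.
  move=> nm; rewrite /t lerD2l lerN2 ler_wpM2l ?r_mono //; lra.
have [n Hn] : exists n, (mu (I (t n) d) < e%:E)%E.
  apply: (@shrink (fun n => I (t n) d) (ga d)) => //.
  - move=> n; apply: mI => //.
  - move=> n m nm x [u /andP[cu ut] <-]; exists u => //; apply/andP; split => //.
    exact: le_trans (t3 _ _ nm) cu.
  - by case/andP: (@Mpos (t 0%N) d (t2 0%N) (t1 0%N) db).
  apply/seteqP; split => x; last first.
    by move=> -> n; exists d => //; apply/andP; split => //; exact: ltW.
  move=> Hx; have [u /andP[ut0 ud] xu] := Hx 0%N Logic.I; subst x.
  have ut n : t n <= u.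
    have [v /andP[vt cv] e1] := Hx n Logic.I.
    have -> : u = v.
      have := t2 0%N; have := t2 n => h1 h2.
      by apply: ga_inj => //; apply/andP; split; lra.
    by [].
  have [uc|cu'] := leP d u.
    by rewrite /= (@le_anti _ _ u d) ?uc ?ud.
  have [k hk] : exists k, (k.+1%:R : R)^-1 < (d - u) / (d - a).
    by apply: r_small; rewrite divr_gt0 ?subr_gt0.
  exfalso; have := ut k; rewrite /t.
  have : (d - a) * (k.+1%:R)^-1 < d - u.
    by rewrite mulrC -ltr_pdivlMr ?subr_gt0.
  generalize ((d - a) / k.+1%:R) => q; lra.
by exists (t n); split.
Qed.
Arguments Mleft [d e].

Lemma Mfin c d : a <= c -> c <= d -> d <= b -> mu (I c d) \is a fin_num.
Proof.
move=> ac cd db; have [cd'|dc] := ltP c d.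
  by case/andP: (Mpos ac cd' db) => h1 h2; rewrite ge0_fin_numE // ltW.
by rewrite (@le_anti _ _ c d) ?cd ?dc // Ipt mu_pt.
Qed.

Local Notation nu' := (nu mu g).

Lemma nuD c d : a <= c -> c <= d -> d <= b -> nu' d - nu' c = fine (mu (I c d)).
Proof.
move=> ac cd db; rewrite /nu -/(I a d) -/(I a c).
rewrite (@Msplit a c d) ?lexx //.
rewrite fineD; first by rewrite addrAC subrr add0r.
all: apply: Mfin; lra.
Qed.

Lemma nu_a : nu' a = 0.
Proof. by rewrite /nu -/(I a a) Ipt mu_pt. Qed.

Lemma nu_le c d : a <= c -> c <= d -> d <= b -> nu' c <= nu' d.
Proof.
move=> ac cd db; rewrite -subr_ge0 nuD //; apply: fine_ge0; exact: measure_ge0.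
Qed.

Lemma nu_lt c d : a <= c -> c < d -> d <= b -> nu' c < nu' d.
Proof.
move=> ac cd db; rewrite -subr_gt0 nuD //; last exact: ltW.
by case/andP: (Mpos ac cd db) => h1 h2; apply: fine_gt0; rewrite h1 h2.
Qed.
Arguments nu_lt [c d].
Arguments nu_le [c d].

Lemma nu_rc x e : a <= x -> x < b -> 0 < e ->
  exists t, [/\ x < t, t <= b & nu' t - nu' x < e].
Proof.
move=> ax xb e0; have [t [xt tb Ht]] := Mright ax xb e0.
exists t; split => //; rewrite nuD //; last exact: ltW.
by rewrite -lte_fin fineK // (@Mfin x t) // ltW.
Qed.

Lemma nu_lc x e : a < x -> x <= b -> 0 < e ->
  exists s, [/\ a <= s, s < x & nu' x - nu' s < e].
Proof.
move=> ax xb e0; have [t [xt tb Ht]] := Mleft ax xb e0.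
exists t; split => //; rewrite nuD //; last exact: ltW.
by rewrite -lte_fin fineK // (@Mfin t x) // ltW.
Qed.
Arguments nu_rc [x e].
Arguments nu_lc [x e].

Lemma nu_cont : {within `[a, b], continuous nu'}.
Proof.
apply/subspace_continuousP => x Ax; apply/cvgrPdist_lt => e e0.
have [ax xb] : a <= x /\ x <= b by move: Ax; rewrite /= in_itv /= => /andP.
have [dr dr0 Hr] : exists2 dr, 0 < dr & forall y, x <= y -> y <= b -> y < x + dr ->
    nu' y - nu' x < e.
  have [xb'|bx] := ltP x b.
    have [t [xt tb Ht]] := nu_rc ax xb' e0.
    exists (t - x); first by rewrite subr_gt0.
    move=> y xy yb yt; apply: le_lt_trans Ht; rewrite lerD2r; apply: nu_le => //; lra.
  exists 1 => // y xy yb _; have -> : y = x by apply: le_anti; rewrite xy andbT; lra.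
  by rewrite subrr.
have [dl dl0 Hl] : exists2 dl, 0 < dl & forall y, a <= y -> y <= x -> x - dl < y ->
    nu' x - nu' y < e.
  have [ax'|xa] := ltP a x.
    have [t [xt tb Ht]] := nu_lc ax' xb e0.
    exists (x - t); first by rewrite subr_gt0.
    move=> y ay yx yt; apply: le_lt_trans Ht; rewrite lerD2l lerN2; apply: nu_le => //; lra.
  exists 1 => // y ay yx _; have -> : y = x by apply: le_anti; rewrite yx /=; lra.
  by rewrite subrr.
rewrite near_withinE; apply/nbhs_normP; exists (Num.min dr dl) => /=.
  by rewrite lt_min dr0 dl0.
move=> y /= hy Ay.
have [ay yb] : a <= y /\ y <= b by move: Ay; rewrite /= in_itv /= => /andP.
move: hy; rewrite lt_min => /andP[h1 h2].
have [xy|yx] := leP x y.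
  rewrite distrC ger0_norm; last by rewrite subr_ge0 nu_le.
  apply: Hr => //; move: h1; rewrite ler0_norm ?subr_le0 //; lra.
rewrite ger0_norm; last by rewrite subr_ge0 nu_le // ltW.
apply: Hl => //; first exact: ltW.
move: h2; rewrite ger0_norm ?subr_ge0 ?ltW //; lra.
Qed.

Lemma ab : a < b. Proof. by case: Gg. Qed.

Local Notation h := (hlen mu g).

Lemma h_nu : h = nu' b. Proof. by []. Qed.

Lemma nu_surj s : 0 <= s -> s <= h -> exists t, a <= t <= b /\ nu' t = s.
Proof.
move=> s0 sh.
have := @IVT R nu' a b s (ltW ab) nu_cont.
rewrite nu_a h_nu in sh *.
have nb0 : 0 <= nu' b by rewrite -nu_a nu_le // ltW // ab.
rewrite (min_idPl nb0) (max_idPr nb0) s0 sh => /(_ isT)[t].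
by rewrite in_itv /= => tab <-; exists t.
Qed.
Arguments nu_surj [s].

Lemma nu_invP s : 0 <= s -> s <= h ->
  a <= nu_inv mu g s <= b /\ nu' (nu_inv mu g s) = s.
Proof.
move=> s0 sh; rewrite /nu_inv.
have [t [tab ts]] := nu_surj s0 sh.
have := @xgetPex _ a [set t | t \in icc a b /\ nu' t = s] _.
case; first by exists t; split => //; rewrite inE.
by rewrite inE => -> ->.
Qed.
Arguments nu_invP [s].

Lemma nu_inv_le s1 s2 : 0 <= s1 -> s1 <= s2 -> s2 <= h ->
  nu_inv mu g s1 <= nu_inv mu g s2.
Proof.
move=> s10 s12 s2h.
have [/andP[a1 b1] e1] := nu_invP s10 (le_trans s12 s2h).
have [/andP[a2 b2] e2] := nu_invP (le_trans s10 s12) s2h.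
rewrite leNgt; apply/negP => lt21.
have := nu_lt a2 lt21 b1; rewrite e1 e2; lra.
Qed.
Arguments nu_inv_le [s1 s2].

Lemma M_inv s1 s2 : 0 <= s1 -> s1 <= s2 -> s2 <= h ->
  mu (I (nu_inv mu g s1) (nu_inv mu g s2)) = (s2 - s1)%:E.
Proof.
move=> s10 s12 s2h.
have [/andP[a1 b1] e1] := nu_invP s10 (le_trans s12 s2h).
have [/andP[a2 b2] e2] := nu_invP (le_trans s10 s12) s2h.
have le12 := nu_inv_le s10 s12 s2h.
have -> : s2 - s1 = nu' (nu_inv mu g s2) - nu' (nu_inv mu g s1) by rewrite e1 e2.
rewrite nuD // fineK //; exact: Mfin.
Qed.
Arguments M_inv [s1 s2].

Lemma sub_Gamma c d : a <= c -> c < d -> d <= b -> Gamma_mu mu (Path c d ga).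
Proof.
move=> ac cd db; split => //=.
- split => /=; first exact: ltW.
  case: Gg => -[_ cg] _ _ _.
  by apply: continuous_subspaceW cg => t /andP[ct td]; apply/andP; split; lra.
- move=> s t; rewrite !inE => /andP[cs sd] /andP[ct td].
  by apply: ga_inj; apply/andP; split; lra.
- move=> c' d' cc' cd' dd'; apply: (Mpos (c := c') (d := d')); lra.
Qed.

Lemma acc_g (f : X -> R) (rho : T -> \bar R) : measurable_fun setT rho ->
  (forall x, (0 <= rho x)%E) ->
  (forall c d, a <= c -> c < d -> d <= b ->
     ((`|f (ga c) - f (ga d)|)%:E <= \int[mu]_(x in I c d) rho x)%E) ->
  (\int[mu]_(x in I a b) rho x < +oo)%E ->
  abs_cont 0 (hlen mu g) (f \o gamma_h mu g).
Proof.
move=> mrho rho0 Hsub fin e e0.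
have mD : measurable (I a b) by apply: mI.
have [del del0 Hdel] := @rho_abs _ _ _ mu rho mrho rho0 _ mD fin _ e0.
exists del => // n s t Hst Hdisj Hsum.
pose c i := nu_inv mu g (s i).
pose d i := nu_inv mu g (t i).
pose B i : set T := I (c i) (d i) `\` [set ga (c i)].
have cdP i : (i < n)%N -> [/\ a <= c i, c i <= d i & d i <= b].
  move=> ilt; have [s0 [st th]] := Hst i ilt.
  have [/andP[a1 b1] _] := nu_invP s0 (le_trans st th).
  have [/andP[a2 b2] _] := nu_invP (le_trans s0 st) th.
  by split => //; apply: nu_inv_le.
have mpt x : measurable ([set x] : set T).
  apply: closed_meas; apply: accessible_closed_set1.
  exact: hausdorff_accessible (@metric_hausdorff _ _).
have mB i : (i < n)%N -> measurable (B i).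
  move=> ilt; have [ac cd db] := cdP i ilt.
  by apply: measurableD => //; apply: mI => //; exact: le_trans db.
have BD i : (i < n)%N -> B i `<=` I a b.
  move=> ilt; have [ac cd db] := cdP i ilt.
  move=> x [[u /andP[cu ud] <-] _]; exists u => //; apply/andP; split; lra.
have muB i : (i < n)%N -> mu (B i) = (t i - s i)%:E.
  move=> ilt; have [s0 [st th]] := Hst i ilt; have [ac cd db] := cdP i ilt.
  rewrite /B muD0 //; first exact: M_inv.
  by apply: mI => //; exact: le_trans db.
have intB i : (i < n)%N ->
    ((`|(f \o gamma_h mu g) (t i) - (f \o gamma_h mu g) (s i)|)%:E <=
     \int[mu]_(x in B i) rho x)%E.
  move=> ilt; have [ac cd db] := cdP i ilt.
  rewrite /B integral_setD0 //; last by apply: mI => //; exact: le_trans db.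
  rewrite /= /gamma_h -/(c i) -/(d i).
  have [cd'|dc] := ltP (c i) (d i).
    by rewrite distrC; apply: Hsub.
  have -> : d i = c i by apply: le_anti; rewrite dc cd.
  by rewrite subrr normr0 integral_ge0.
have triv : trivIset setT (fun i : 'I_n => B i).
  move=> i j _ _ [x [Bi Bj]]; apply/eqP; apply/negPn/negP => ij.
  have [ci cdi di] := cdP i (ltn_ord i).
  have [cj cdj dj] := cdP j (ltn_ord j).
  have wlog_lem : forall i j : 'I_n, (t i <= s j) -> B i x -> B j x -> False.
    move=> i' j' tij [[u /andP[cu ud] xu] nu1] [[v /andP[cv vd] xv] nv1].
    have [ci' cdi' di'] := cdP i' (ltn_ord i').
    have [cj' cdj' dj'] := cdP j' (ltn_ord j').
    have [s0 [st th]] := Hst i' (ltn_ord i').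
    have [s0' [st' th']] := Hst j' (ltn_ord j').
    have dc : d i' <= c j'.
      by apply: nu_inv_le; lra.
    have uv : u = v by apply: ga_inj; [apply/andP; split; lra|apply/andP; split; lra|rewrite xu xv].
    apply: nv1; rewrite /= -xv -uv; congr ga; apply: le_anti; apply/andP; split; lra.
  have nij : (i : nat) <> j by move=> h; move/negP: ij; apply; apply/eqP; apply: val_inj.
  case: (Hdisj i j (ltn_ord i) (ltn_ord j) nij) => [tij|tji].
  - exact: (wlog_lem i j tij Bi Bj).
  - exact: (wlog_lem j i tji Bj Bi).
have mBo (i : 'I_n) : measurable (B i) by apply: mB.
have mU : measurable (\big[setU/set0]_(i < n) B i).
  by apply: bigsetU_measurable => i _; exact: mB.
have UD : \big[setU/set0]_(i < n) B i `<=` I a b.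
  elim/big_ind: _ => //.
  - by move=> A1 A2 h1 h2 x [/h1|/h2].
  - by move=> i _; exact: (BD i (ltn_ord i)).
have muU : (mu (\big[setU/set0]_(i < n) B i) < del%:E)%E.
  rewrite (@measure_bigsetU_ord _ _ _ mu n xpredT (fun i : 'I_n => B i)) //.
  rewrite (eq_bigr (fun i : 'I_n => (t i - s i)%:E)); last by move=> i _; exact: muB.
  by rewrite sumEFin lte_fin.
rewrite -lte_fin -sumEFin.
apply: le_lt_trans (Hdel _ mU UD muU).
rewrite (@ge0_integral_bigsetU _ _ _ mu 'I_n (fun i => B i) rho (index_enum 'I_n)) //.
- by apply: lee_sum => i _; apply: intB.
- exact: index_enum_uniq.
- by apply: sub_trivIset triv.
- exact: measurable_funTS.
Qed.
End Aux.

Section Mod.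
Context (R : realType) (X : pmetricType R) (mu m : {measure set (borel X) -> \bar R}) (p : R).
Hypothesis p0 : 0 < p.
Variable rho : borel X -> \bar R.
Hypotheses (mrho : measurable_fun setT rho) (rho0 : forall x, (0 <= rho x)%E)
  (irho : (\int[m]_x (rho x `^ p) < +oo)%E).

Lemma maxe_pow (u v : \bar R) : (maxe u v `^ p <= u `^ p + v `^ p)%E.
Proof.
rewrite /Order.max; case: ifP => _.
  by rewrite leeDr // poweR_ge0.
by rewrite leeDl // poweR_ge0.
Qed.

Lemma mod_zero (N0 N : set (Defs.path R X)) : Mod_p mu m p N0 = 0%E ->
 (forall g, N g -> measurable (Defs.Im g : set (borel X)) /\
    ((exists g0, [/\ N0 g0, measurable (Defs.Im g0 : set (borel X)) & Defs.Im g0 `<=` Defs.Im g])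
      \/ line_int mu rho g = +oo%E)) ->
 Mod_p mu m p N = 0%E.
Proof.
move=> M0 HN; apply/eqP; rewrite eq_le; apply/andP; split; last first.
  apply: le_ereal_inf_tmp => _ [h [mh h0 _] <-]; apply: integral_ge0 => x _.
  exact: poweR_ge0.
apply/lee_addgt0Pr => e e0; rewrite add0e.
have e20 : 0 < e / 2 by rewrite divr_gt0.
have [_ [h1 [mh1 h10 ah1] <-] lt1] :
    exists2 y, [set (\int[m]_x (h x `^ p))%E | h in admissible mu N0] y &
      (y < (e / 2)%:E)%E.
  by apply: ereal_inf_lt; rewrite -/(Mod_p mu m p N0) M0 lte_fin.
have rp0 : (0 <= \int[m]_x (rho x `^ p))%E.
  by apply: integral_ge0 => x _; exact: poweR_ge0.
have fC : (\int[m]_x (rho x `^ p))%E \is a fin_num by rewrite ge0_fin_numE.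
set C := fine (\int[m]_x (rho x `^ p))%E.
have C0 : 0 <= C by apply: fine_ge0.
set q := e / 2 / (C + 1).
have q0 : 0 < q by rewrite divr_gt0 // ltr_wpDl.
set k := q `^ p^-1.
have k0 : 0 < k by apply: powR_gt0.
have kp : k `^ p = q by rewrite -powRrM mulVf ?gt_eqF // powRr1 // ltW.
pose h := fun x => maxe (h1 x) (k%:E * rho x)%E.
have mk : measurable_fun setT (fun x => k%:E * rho x)%E by exact: measurable_funeM.
have mh : measurable_fun setT h by exact: measurable_maxe.
have h0 x : (0 <= h x)%E by rewrite le_max h10.
have mp (u : borel X -> \bar R) : measurable_fun setT u ->
    measurable_fun setT (fun x => u x `^ p)%E.
  by move=> mu'; exact: (measurableT_comp (measurable_poweR p) mu').
have ah : admissible mu N h.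
  split => // g Ng; have [mIg [[g0 [N0g0 mI0 sub]]|inf]] := HN g Ng.
    apply: le_trans (ah1 g0 N0g0) _; rewrite /line_int.
    apply: (@le_trans _ _ (\int[mu]_(x in (Defs.Im g0 : set (borel X))) h x)%E).
      apply: ge0_le_integral => //.
      - exact: measurable_funTS.
      - exact: measurable_funTS.
      - by move=> x _; rewrite le_max lexx.
    apply: ge0_subset_integral => //; exact: measurable_funTS.
  rewrite /line_int; apply: (@le_trans _ _ (\int[mu]_(x in (Defs.Im g : set (borel X))) (k%:E * rho x))%E).
    rewrite ge0_integralZl_EFin //; last 2 first.
    - exact: measurable_funTS.
    - exact: ltW.
    by move: inf; rewrite /line_int => ->; rewrite mulry gtr0_sg // mul1e leey.
  apply: ge0_le_integral => //.
  - by move=> x _; rewrite mule_ge0 // lee_fin ltW.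
  - exact: measurable_funTS.
  - exact: measurable_funTS.
  - by move=> x _; rewrite le_max lexx orbT.
apply: (@le_trans _ _ (\int[m]_x (h x `^ p))%E).
  by apply: ereal_inf_lbound; exists h.
apply: (@le_trans _ _ (\int[m]_x (h1 x `^ p + (k%:E * rho x) `^ p))%E).
  apply: ge0_le_integral => //.
  - by move=> x _; exact: poweR_ge0.
  - exact: mp.
  - by apply: emeasurable_funD; apply: mp.
  - by move=> x _; apply: maxe_pow.
rewrite ge0_integralD //; last 4 first.
- by move=> x _; exact: poweR_ge0.
- exact: mp.
- by move=> x _; exact: poweR_ge0.
- exact: mp.
have -> : (\int[m]_x ((k%:E * rho x) `^ p) = (q * C)%:E)%E.
  under eq_integral do rewrite poweRM ?lee_fin ?(ltW k0) // poweR_EFin kp.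
  rewrite ge0_integralZl_EFin //; last 3 first.
  - by move=> x _; exact: poweR_ge0.
  - exact: mp.
  - exact: ltW.
  by rewrite -(fineK fC) -/C -EFinM.
have : q * C <= e / 2.
  rewrite /q mulrAC ler_pdivrMr ?ltr_wpDl //.
  by rewrite mulrDr mulr1 lerDl ltW.
move=> qC; rewrite [e in (_ <= e%:E)%E]splitr EFinD.
apply: leeD; [exact: ltW | by rewrite lee_fin].
Qed.
End Mod.

Theorem lemma3p6 (R : realType) (X : pmetricType R)
  (mu m : {measure set (borel X) -> \bar R}) (p : R)
  (f : X -> R) (rho : borel X -> \bar R) :
  (forall x : X, mu [set x] = 0%E) ->
  0 < p ->
  measurable_fun [set: borel X] rho -> (forall x, (0 <= rho x)%E) ->
  (\int[m]_x (rho x `^ p) < +oo)%E ->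
  p_weak_upper_gradient mu m p f rho ->
  ACC_p mu m p f.
Proof.
move=> mu_pt p0 mrho rho0 irho [_ _ [N0 [N0G N0M N0P]]].
pose N := [set g : Defs.path R X | Gamma_mu mu g /\
  ((exists c d, [/\ Defs.pa g <= c, c < d, d <= Defs.pb g &
      N0 (Path c d (Defs.pmap g))]) \/ line_int mu rho g = +oo%E)].
exists N; split.
- by move=> g [].
- apply: (@mod_zero R X mu m p p0 rho mrho rho0 irho N0 N N0M) => g [Gg H].
  split; first exact: (@mI R X mu g Gg _ _ (lexx _) (lexx _)).
  case: H => [[c [d [ac cd db Nsub]]]|inf]; [left|by right].
  exists (Path c d (Defs.pmap g)); split => //.
  + exact: (@mI R X mu g Gg c d ac db).
  + move=> x [t /= /andP[ct td] <-]; exists t => //; apply/andP; split; lra.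
- move=> g Gg NgN.
  apply: (@acc_g R X mu mu_pt g Gg f rho mrho rho0).
  + move=> c d ac cd db.
    have := N0P (Path c d (Defs.pmap g)) (@sub_Gamma R X mu g Gg c d ac cd db).
    apply => N0s; apply: NgN; split => //; left; exists c, d; split => //.
  + rewrite ltey; apply/negP => /eqP inf; apply: NgN; split => //; right.
    exact: inf.
Qed.
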